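(* Let $K$ be a compact Hausdorff space. A one-dimensional real Banach space can be U-embedded into $C(K)$ if and only if $K$ contains at least one $G_\delta$-point, i.e. a point $p$ such that $\{p\}$ is a $G_\delta$-subset of $K$.
   Context: $C(K)$ carries the sup norm. A linear isometry $T\colon X\to Y$ is a U-embedding if every $x^*\in X^*$ has a unique $y^*\in Y^*$ with $T^*(y^* )=x^*$ and $\|y^*\|=\|x^*\|$. *)

(* Defs.v *)
From HB Require Import structures.
From mathcomp Require Import all_boot all_order all_algebra.
From mathcomp Require Import all_classical all_reals all_analysis borel_hierarchy.
Set Implicit Arguments. Unset Strict Implicit. Unset Printing Implicit Defensive.
Import Order.TTheory GRing.Theory Num.Theory.
Import numFieldNormedType.Exports.
Local Open Scope classical_set_scope.
Local Open Scope ring_scope.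

Section Defs.
Variables (R : realType).

Section CK.
Variable K : topologicalType.

Definition supnorm (f : K -> R) : R := sup [set `|f x| | x in [set: K]].

(* y* in C(K)^*: a bounded linear functional on C(K).  We represent it by a
   function on K -> R; only its values on continuous functions matter. *)
Definition CK_dual (phi : (K -> R) -> R) : Prop :=
  [/\ (forall f g, continuous f -> continuous g ->
         phi (fun x => f x + g x) = phi f + phi g),
      (forall (a : R) f, continuous f -> phi (fun x => a * f x) = a * phi f)
    & exists M : R, forall f, continuous f -> `|phi f| <= M * supnorm f].

Definition CK_dual_norm (phi : (K -> R) -> R) : R :=
  sup [set `|phi f| | f in [set f : K -> R | continuous f /\ supnorm f <= 1]].
End CK.

Section Dual.
Variable X : normedModType R.

Definition dual_fun (xs : X -> R) : Prop :=
  (forall (a : R) (x y : X), xs (a *: x + y) = a * xs x + xs y) /\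
  (exists M : R, forall x, `|xs x| <= M * `|x|).

Definition dual_norm (xs : X -> R) : R :=
  sup [set `|xs x| | x in [set x : X | `|x| <= 1]].

Definition one_dimensional : Prop :=
  exists e : X, e != 0 /\ forall x : X, exists t : R, x = t *: e.
End Dual.

Section UEmb.
Variables (X : normedModType R) (K : topologicalType).

Definition lin_isometry_CK (T : X -> K -> R) : Prop :=
  [/\ (forall x, continuous (T x)),
      (forall (a : R) (x y : X), T (a *: x + y) = (fun k => a * T x k + T y k))
    & (forall x, supnorm (T x) = `|x|)].

(* T^*(y* ) = y* o T.  Uniqueness of y* is as an element of C(K)^*, i.e.
   agreement on all continuous functions. *)
Definition U_embedding (T : X -> K -> R) : Prop :=
  lin_isometry_CK T /\
  forall xs : X -> R, dual_fun xs ->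
    exists ys : (K -> R) -> R,
      [/\ CK_dual ys, (forall x, ys (T x) = xs x),
          CK_dual_norm ys = dual_norm xs
        & forall zs : (K -> R) -> R, CK_dual zs ->
            (forall x, zs (T x) = xs x) -> CK_dual_norm zs = dual_norm xs ->
            forall f : K -> R, continuous f -> zs f = ys f].
End UEmb.
End Defs.

(* Main.v *)
Require Import Defs.
From HB Require Import structures.
From mathcomp Require Import all_boot all_order all_algebra.
From mathcomp Require Import all_classical all_reals all_analysis borel_hierarchy.
From mathcomp Require Import ring lra.
Import Order.TTheory GRing.Theory Num.Theory.
Import numFieldNormedType.Exports.
Local Open Scope classical_set_scope.
Local Open Scope ring_scope.
Set Implicit Arguments. Unset Strict Implicit. Unset Printing Implicit Defensive.

Section Basic.
Variables (R : realType) (K : topologicalType).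
Hypothesis cK : compact [set: K].

Lemma cont_scale (a : R) (g : K -> R) : continuous g -> continuous (fun x => a * g x).
Proof. move=> cg x; exact: (cvgM (cvg_cst a) (cg x)). Qed.

Lemma cont_add (f g : K -> R) : continuous f -> continuous g -> continuous (fun x => f x + g x).
Proof. move=> cf cg x; exact: (cvgD (cf x) (cg x)). Qed.

Lemma cont_cst (c : R) : continuous (fun _ : K => c).
Proof. move=> x; exact: cvg_cst. Qed.

Lemma cont_norm (g : K -> R) : continuous g -> continuous (fun x => `|g x|).
Proof. move=> cg x; exact: (cvg_norm (cg x)). Qed.

Lemma bnd (g : K -> R) : continuous g -> exists M, forall x, `|g x| <= M.
Proof.
move=> cg; case: (pselect ([set: K] !=set0)) => [ne|e].
  have [c _ Hc] := @compact_EVT_max K R (fun x => `|g x|) _ ne cK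
     (continuous_subspaceT (cont_norm cg)).
  by exists `|g c| => x; apply: Hc; rewrite in_setT.
exists 0 => x; exfalso; apply: e; by exists x.
Qed.

Lemma supnorm_ub (g : K -> R) : continuous g -> forall x, `|g x| <= supnorm g.
Proof.
move=> cg x; have [M HM] := bnd cg.
apply: ub_le_sup; last by exists x.
by exists M => _ [y _ <-].
Qed.

Lemma supnorm_le (g : K -> R) M : 0 <= M -> (forall x, `|g x| <= M) -> supnorm g <= M.
Proof.
move=> M0 HM; case: (pselect ([set: K] !=set0)) => [[x _]|e].
  apply: ge_sup; first by exists `|g x|, x.
  by move=> _ [y _ <-].
have E : [set `|g x| | x in [set: K]] = set0.
  by apply/seteqP; split => // t [y _ _] /=; apply: e; exists y.
by rewrite /supnorm E sup0.
Qed.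

Lemma supnorm_ge0 (g : K -> R) : continuous g -> 0 <= supnorm g.
Proof.
move=> cg; case: (pselect ([set: K] !=set0)) => [[x _]|e].
  exact: le_trans (normr_ge0 _) (supnorm_ub cg x).
have E : [set `|g x| | x in [set: K]] = set0.
  by apply/seteqP; split => // t [y _ _] /=; apply: e; exists y.
by rewrite /supnorm E sup0.
Qed.

Lemma supnorm_eq (g : K -> R) m x0 : continuous g ->
  (forall x, `|g x| <= m) -> `|g x0| = m -> supnorm g = m.
Proof.
move=> cg Hm Hx0; apply/le_anti/andP; split.
  by apply: supnorm_le => //; rewrite -Hx0.
by rewrite -Hx0; apply: supnorm_ub.
Qed.

Lemma dualnorm_ge (phi : (K -> R) -> R) g : CK_dual phi -> continuous g ->
  supnorm g <= 1 -> `|phi g| <= CK_dual_norm phi.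
Proof.
move=> [_ _ [M HM]] cg sg; apply: ub_le_sup; last by exists g.
exists `|M| => _ [h [ch sh] <-].
apply: le_trans (HM h ch) _.
apply: le_trans (ler_norm _) _; rewrite normrM (ger0_norm (supnorm_ge0 ch)).
by rewrite -{2}(mulr1 `|M|) ler_wpM2l.
Qed.

Lemma dualnorm_le (phi : (K -> R) -> R) c : 0 <= c ->
  (forall g, continuous g -> supnorm g <= 1 -> `|phi g| <= c) -> CK_dual_norm phi <= c.
Proof.
move=> c0 H; apply: ge_sup.
  exists `|phi (fun=> 0)|, (fun=> 0) => //; split; first exact: cont_cst.
  by apply: supnorm_le => // x; rewrite normr0.
by move=> _ [h [ch sh] <-]; apply: H.
Qed.

Lemma dual_bound (phi : (K -> R) -> R) g : CK_dual phi -> continuous g ->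
  `|phi g| <= CK_dual_norm phi * supnorm g.
Proof.
move=> dphi cg; have [Hadd Hsc _] := dphi.
have s0 := supnorm_ge0 cg.
have [sz|spos] := eqVneq (supnorm g) 0.
  have g0 : g = (fun x => 0 * g x).
    apply: funext => x; rewrite mul0r; apply/eqP; rewrite -normr_le0 -sz.
    exact: supnorm_ub.
  by rewrite sz mulr0 g0 Hsc // mul0r normr0.
have sp : 0 < supnorm g by rewrite lt0r spos.
pose h := fun x => (supnorm g)^-1 * g x.
have ch : continuous h by apply: cont_scale.
have sh : supnorm h <= 1.
  apply: supnorm_le => // x; rewrite /h normrM ger0_norm ?invr_ge0 //.
  by rewrite ler_pdivrMl // mulr1 supnorm_ub.
have := dualnorm_ge dphi ch sh; rewrite /h Hsc // normrM ger0_norm ?invr_ge0 //.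
by rewrite ler_pdivrMl // mulrC.
Qed.

End Basic.
Lemma clampP (R : realType) (e y : R) : 0 < e ->
  `|Order.max (-e) (Order.min e y)| <= e /\ `|y - Order.max (-e) (Order.min e y)| <= `|y| /\
  (`|y| < e -> y - Order.max (-e) (Order.min e y) = 0).
Proof.
move=> e0; rewrite /Order.max /Order.min.
case: (ltP e y) => h1; [case: (ltP (-e) e) => h2 | case: (ltP (-e) y) => h2];
(split; first by rewrite ler_norml; apply/andP; split; lra);
(have [y0|y0] := leP 0 y; [rewrite (ger0_norm y0)|rewrite (ltr0_norm y0)]);
(split; [rewrite ler_norml; apply/andP; split; lra | move=> h; lra]).
Qed.

Section Peak.
Variables (R : realType) (K : topologicalType).
Hypothesis cK : compact [set: K].

Lemma delta_exists (f g : K -> R) p e : continuous f -> continuous g ->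
  (forall x, x != p -> `|f x| < 1) -> `|g p| < e ->
  exists2 d, 0 < d & forall x, e <= `|g x| -> `|f x| <= 1 - d.
Proof.
move=> cf cg fpk gpe.
pose C := [set x | e <= `|g x|].
case: (pselect (C !=set0)) => [ne|ne]; last first.
  exists 1 => // x Cx; exfalso; apply: ne; by exists x.
have clC : closed C.
  have -> : C = (fun x => `|g x|) @^-1` [set r | e <= r] by [].
  apply: preimage_closed; last exact: closed_ge.
  by move=> x _; apply: cont_norm.
have cC : compact C by apply: subclosed_compact clC cK _.
have [k0 Ck0 Hk0] := @compact_EVT_max K R (fun x => `|f x|) C ne cC
     (continuous_subspaceT (cont_norm cf)).
have k0p : k0 != p.
  apply/eqP => k0p; move: Ck0; rewrite inE /C /= k0p => h; lra.
exists (1 - `|f k0|); first by have := fpk _ k0p; lra.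
move=> x Cx; have := Hk0 x (mem_set Cx) => /=; lra.
Qed.

Lemma peak_unique (f : K -> R) p (phi : (K -> R) -> R) c :
  continuous f -> (forall x, `|f x| <= 1) -> f p = 1 ->
  (forall x, x != p -> `|f x| < 1) ->
  CK_dual phi -> phi f = c -> CK_dual_norm phi <= `|c| ->
  forall g, continuous g -> phi g = c * g p.
Proof.
move=> cf f1 fp fpk dphi phic Nc.
have [Hadd Hsc _] := dphi.
have Hb : forall h, continuous h -> `|phi h| <= `|c| * supnorm h.
  move=> h ch; apply: le_trans (dual_bound cK dphi ch) _.
  by apply: ler_wpM2r => //; apply: (supnorm_ge0 cK).
have Hb1 : forall h, continuous h -> supnorm h <= 1 -> `|phi h| <= `|c|.
  move=> h ch sh; apply: le_trans (Hb h ch) _.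
  by rewrite -{2}(mulr1 `|c|); apply: ler_wpM2l.
have stepA : forall g, continuous g -> (forall x, `|g x| <= 1 - `|f x|) -> phi g = 0.
  move=> g cg Hg.
  have s1 : supnorm (fun x => f x + g x) <= 1.
    apply: supnorm_le => // x; apply: le_trans (ler_normD _ _) _.
    by have := Hg x; lra.
  have s2 : supnorm (fun x => f x + (-1) * g x) <= 1.
    apply: supnorm_le => // x; apply: le_trans (ler_normD _ _) _.
    by rewrite normrM normrN normr1 mul1r; have := Hg x; lra.
  have h1 := Hb1 _ (cont_add cf cg) s1; rewrite Hadd // phic in h1.
  have h2 := Hb1 _ (cont_add cf ((@cont_scale R K (-1) g cg))) s2.
  rewrite Hadd // ?Hsc // ?phic in h2; last exact: cont_scale.
  have [c0|c0] := leP 0 c; [rewrite (ger0_norm c0) in h1 h2|rewrite (ltr0_norm c0) in h1 h2];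
  move: h1 h2; rewrite !ler_norml => /andP[h1 h1'] /andP[h2 h2']; lra.
have stepB : forall g, continuous g -> g p = 0 -> phi g = 0.
  move=> g cg gp.
  have key : forall e, 0 < e -> `|phi g| <= `|c| * e.
    move=> e e0.
    pose cl := (fun=> -e) \max ((fun=> e) \min g).
    have ccl : continuous cl.
      move=> x; apply: continuous_max; first exact: cvg_cst.
      by apply: continuous_min; [exact: cvg_cst | exact: cg].
    pose ge := fun x => g x + (-1) * cl x.
    have cge : continuous ge by apply: cont_add => //; apply: cont_scale.
    have [d d0 Hd] := delta_exists cf cg fpk (e := e) (ltac:(by rewrite gp normr0)).
    have [S HS] := bnd cK cg.
    have S0 : 0 <= S by apply: le_trans (normr_ge0 (g p)) (HS p).
    pose l := (S + 1) / d.
    have l0 : 0 < l by apply: divr_gt0 => //; lra.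
    have A0 : phi (fun x => l^-1 * ge x) = 0.
      apply: stepA; first exact: cont_scale.
      move=> x; have [c1 [c2 c3]] := clampP (g x) e0.
      have il0 : 0 < l^-1 by rewrite invr_gt0.
      rewrite normrM (gtr0_norm il0).
      have [hx|hx] := leP e `|g x|.
        have := Hd x hx; have := HS x.
        rewrite /ge /cl /= mulN1r => h1 h2.
        apply: (@le_trans _ _ (l^-1 * S)).
          by apply: ler_wpM2l; [exact: ltW | apply: le_trans c2 h1].
        rewrite /l invf_div -mulrA; apply: (@le_trans _ _ d); last lra.
        apply: ler_piMr; first lra.
        rewrite mulrC ler_pdivrMr; last lra.
        lra.
      rewrite /ge /cl /= mulN1r (c3 hx) normr0 mulr0.
      by have := f1 x; lra.
    have G0 : phi ge = 0.
      move: A0; rewrite Hsc // => /eqP; rewrite mulf_eq0 invr_eq0.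
      by case/orP => /eqP // l00; move: l0; rewrite l00 ltxx.
    have -> : g = (fun x => cl x + ge x).
      by apply: funext => x; rewrite /ge; ring.
    rewrite Hadd // G0 addr0.
    apply: le_trans (Hb _ ccl) _; apply: ler_wpM2l => //.
    apply: supnorm_le; first exact: ltW.
    by move=> x; have [] := clampP (g x) e0.
  case: (eqVneq (phi g) 0) => // nz; exfalso.
  have z0 : 0 < `|phi g| by rewrite normr_gt0.
  pose e := `|phi g| / (2 * (`|c| + 1)).
  have e0 : 0 < e by apply: divr_gt0 => //; lra.
  have he : e * (2 * (`|c| + 1)) = `|phi g|.
    rewrite /e mulfVK //; apply/eqP => h; have := normr_ge0 c; lra.
  have := key e e0; have := normr_ge0 c; nra.
move=> g cg.
pose g' := fun x => g x + (- g p) * f x.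
have cg' : continuous g' by apply: cont_add => //; apply: cont_scale.
have g'p : g' p = 0 by rewrite /g' fp; ring.
have := stepB g' cg' g'p; rewrite /g' Hadd // ?Hsc // ?phic; last exact: cont_scale.
move=> h; lra.
Qed.
End Peak.
Section Series.
Variables (R : realType) (K : topologicalType).
Variable u : nat -> K -> R.
Hypothesis u01 : forall i x, 0 <= u i x <= 1.
Hypothesis uc : forall i, continuous (u i).

Let q : R := 2^-1.
Definition S_ n x := \sum_(0 <= i < n) q ^+ i.+1 * u i x.

Lemma q0 : 0 < q. Proof. rewrite /q invr_gt0; lra. Qed.

Lemma S0 x : S_ 0 x = 0. Proof. by rewrite /S_ big_geq. Qed.

Lemma SS n x : S_ n.+1 x = S_ n x + q ^+ n.+1 * u n x.
Proof. by rewrite /S_ big_nat_recr. Qed.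

Lemma S_tail n m x : 0 <= S_ (n + m) x - S_ n x <= q ^+ n - q ^+ (n + m).
Proof.
elim: m => [|m IH]; first by rewrite addn0 !subrr lexx.
rewrite addnS SS !exprS.
have := u01 (n + m) x; have hq := exprn_gt0 (n + m) q0.
move: IH => /andP[h1 h2] /andP[h3 h4].
have hp : 0 <= q * q ^+ (n + m) * u (n + m) x by apply: mulr_ge0 => //; apply: mulr_ge0; [exact: ltW q0| exact: ltW].
have hp2 : q * q ^+ (n + m) * u (n + m) x <= q * q ^+ (n + m).
  rewrite -{2}(mulr1 (q * q ^+ (n + m))); apply: ler_wpM2l => //.
  by apply: mulr_ge0; [exact: ltW q0| exact: ltW].
apply/andP; split; rewrite /q in hp hp2 h1 h2 *; lra.
Qed.

Lemma S_ge0 n x : 0 <= S_ n x.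
Proof. by have := S_tail 0 n x; rewrite S0 subr0 add0n => /andP[]. Qed.

Lemma S_le1 n x : S_ n x <= 1.
Proof.
have := S_tail 0 n x; rewrite S0 subr0 add0n expr0 => /andP[_ h].
have := exprn_gt0 n q0; lra.
Qed.

Lemma S_mono (n m : nat) x : (n <= m)%N -> S_ n x <= S_ m x.
Proof.
move=> /subnK <-; rewrite addnC.
by have := S_tail n (m - n) x => /andP[h _]; lra.
Qed.

Lemma S_cont n : continuous (S_ n).
Proof.
elim: n => [|n IH].
  have -> : S_ 0 = fun=> 0 by apply: funext => x; rewrite S0.
  by move=> x; exact: cvg_cst.
have -> : S_ n.+1 = fun x => S_ n x + q ^+ n.+1 * u n x.
  by apply: funext => x; rewrite SS.
have hc : continuous (fun x => q ^+ n.+1 * u n x).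
  by move=> y; exact: (cvgM (cvg_cst (q ^+ n.+1)) (@uc n y)).
move=> x; exact: (cvgD (IH x) (hc x)).
Qed.

Definition F0 x := sup [set S_ n x | n in [set: nat]].

Lemma F0_ub n x : S_ n x <= F0 x.
Proof.
apply: ub_le_sup; last by exists n.
by exists 1 => _ [m _ <-]; apply: S_le1.
Qed.

Lemma F0_lb n x : F0 x <= S_ n x + q ^+ n.
Proof.
apply: ge_sup; first by exists (S_ 0 x), 0%N.
move=> _ [m _ <-].
have [nm|mn] := leqP n m.
  rewrite -(subnKC nm); have := S_tail n (m - n) x => /andP[_ h].
  have := exprn_gt0 (n + (m - n)) q0; lra.
have := S_mono x (ltnW mn); have := exprn_gt0 n q0; lra.
Qed.

Lemma F0_cont : continuous F0.
Proof.
move=> x; apply/cvgrPdist_lt => e e0.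
have hq : `|q| < 1 by rewrite gtr0_norm ?q0 // /q; lra.
have := @cvg_expr R q hq.
move/cvgrPdist_lt => /(_ (e / 3)) [|N _ HN]; first lra.
have hq0 : 0 < q ^+ N by apply: exprn_gt0; exact: q0.
have := HN N (leqnn N); rewrite sub0r normrN gtr0_norm //.
move=> hN.
have := @S_cont N x; move/cvgrPdist_lt => /(_ (e / 3)) H.
have {H} := H ltac:(lra).
apply: filterS => y hy.
have a1 := F0_ub N x; have a2 := F0_lb N x; have a3 := F0_ub N y; have a4 := F0_lb N y.
move: hy; rewrite !ltr_norml => /andP[b1 b2]; apply/andP; split; lra.
Qed.

Variable p : K.
Hypothesis up : forall i, u i p = 1.

Lemma gap i x N : u i x = 0 ->
  S_ N x + (if (i < N)%N then q ^+ i.+1 else 0) <= S_ N p.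
Proof.
move=> hx; elim: N => [|N IH]; first by rewrite !S0 /= addr0.
rewrite !SS up mulr1.
have hw : 0 < q ^+ N.+1 by apply: exprn_gt0; exact: q0.
have := u01 N x => /andP[a b].
have hm : q ^+ N.+1 * u N x <= q ^+ N.+1 by apply: ler_piMr => //; exact: ltW.
case: (ltngtP i N) => h.
- have -> : (i < N.+1)%N by apply: ltnW.
  by rewrite h in IH; lra.
- have -> : (i < N.+1)%N = false by apply/negbTE; rewrite -leqNgt.
  by rewrite ltnNge (ltnW h) /= in IH; lra.
- subst i; rewrite hx mulr0 ltnSn ltnn in IH *; lra.
Qed.

Lemma F0_gap i x : u i x = 0 -> F0 x <= F0 p - q ^+ i.+1.
Proof.
move=> hx; apply: ge_sup; first by exists (S_ 0 x), 0%N.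
move=> _ [m _ <-].
have h1 := S_mono x (leq_addr i.+1 m).
have := gap (m + i.+1) hx.
have -> : (i < m + i.+1)%N by rewrite addnS ltnS leq_addl.
have := F0_ub (m + i.+1) p; lra.
Qed.

Lemma F0p_pos : 0 < F0 p.
Proof.
have := F0_ub 1 p; rewrite SS S0 up mulr1 expr1 add0r.
have := q0; lra.
Qed.

Lemma F0_ge0 x : 0 <= F0 x.
Proof. exact: le_trans (S_ge0 0 x) (F0_ub 0 x). Qed.

End Series.
Lemma urysohn_pt (R : realType) (K : topologicalType) (hK : hausdorff_space K)
  (cK : compact [set: K]) (A : set K) (p : K) : closed A -> ~ A p ->
  exists g : K -> R, [/\ continuous g, forall x, 0 <= g x <= 1,
     forall x, A x -> g x = 0 & g p = 1].
Proof.
move=> clA nAp.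
have nK : normal_space K := compact_normal hK cK.
have sep := (@normal_separatorP R K).1 nK.
have cl1 : closed [set p] := @accessible_closed_set1 K (hausdorff_accessible hK) p.
have : uniform_separator A [set p].
  apply: sep => //; apply/seteqP; split => // x [Ax xp]; apply: nAp; by move: Ax; rewrite xp.
move/(@uniform_separatorP K R) => [g [cg rg g0 g1]].
exists g; split => //.
- move=> x; have := rg _ (imageT g x); rewrite /= in_itv /=; done.
- by move=> x Ax; exact: (g0 _ (imageP g Ax)).
- exact: (g1 _ (imageP g (erefl p))).
Qed.

Lemma peak_exists (R : realType) (K : topologicalType) (hK : hausdorff_space K)
  (cK : compact [set: K]) (p : K) : Gdelta [set p] ->
  exists f : K -> R, [/\ continuous f, forall x, `|f x| <= 1, f p = 1 &
    forall x, x != p -> `|f x| < 1].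
Proof.
case=> F Fo Fp.
have pF : forall i, F i p.
  by move=> i; have : [set p] p by []; rewrite Fp; apply.
have /choice [u Hu] : forall i, exists g : K -> R, [/\ continuous g,
    forall x, 0 <= g x <= 1, forall x, (~` F i) x -> g x = 0 & g p = 1].
  move=> i; apply: urysohn_pt => //; first exact: open_closedC.
  by move=> /= /(_ (pF i)).
have u01 : forall i x, 0 <= u i x <= 1 by move=> i x; have [_ h _ _] := Hu i.
have uc : forall i, continuous (u i) by move=> i; have [h _ _ _] := Hu i.
have up : forall i, u i p = 1 by move=> i; have [_ _ _ h] := Hu i.
have usep : forall x, x != p -> exists i, u i x = 0.
  move=> x xp; case: (pselect (exists i, ~ F i x)) => [[i nF]|h].
    by exists i; have [_ _ hh _] := Hu i; apply: hh.
  exfalso; move/eqP: xp; apply.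
  have : (\bigcap_i F i) x.
    by move=> i _; apply: contrapT => nF; apply: h; exists i.
  by rewrite -Fp.
have P0 := F0p_pos u01 up.
exists (fun x => (F0 u p)^-1 * F0 u x); split.
- by apply: cont_scale; apply: F0_cont.
- move=> x; rewrite normrM ger0_norm ?invr_ge0 ?(ltW P0) //.
  rewrite ger0_norm ?(F0_ge0 u01) // ler_pdivrMl // mulr1.
  have [->|xp] := eqVneq x p; first by [].
  have [i hi] := usep x xp; have := F0_gap u01 up hi.
  have : 0 < (2^-1 : R) ^+ i.+1 by apply: exprn_gt0; rewrite invr_gt0; lra.
  lra.
- by rewrite mulVf // gt_eqF.
- move=> x xp; rewrite normrM ger0_norm ?invr_ge0 ?(ltW P0) //.
  rewrite ger0_norm ?(F0_ge0 u01) // ltr_pdivrMl // mulr1.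
  have [i hi] := usep x xp; have := F0_gap u01 up hi.
  have : 0 < (2^-1 : R) ^+ i.+1 by apply: exprn_gt0; rewrite invr_gt0; lra.
  lra.
Qed.

Unset Implicit Arguments. Set Strict Implicit.

Theorem corollary6p29 (R : realType) (K : topologicalType)
  (hK : hausdorff_space K) (cK : compact [set: K])
  (X : completeNormedModType R) (hX : one_dimensional X) :
  (exists T : X -> K -> R, U_embedding T) <->
  (exists p : K, Gdelta [set p]).
Proof.
case: hX => e [e0 He].
have /choice [co Hco] := He.
have ne : 0 < `|e| by rewrite normr_gt0.
have ne0 : `|e| != 0 by rewrite normr_eq0.
have co_uniq : forall t s, t *: e = s *: e -> t = s.
  move=> t s h; apply/eqP; rewrite -subr_eq0.
  have : (t - s) *: e == 0 by rewrite scalerBl h subrr.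
  by rewrite scaler_eq0 (negbTE e0) orbF.
have coZ : forall t, co (t *: e) = t by move=> t; apply: co_uniq; rewrite -Hco.
have coL : forall a x y, co (a *: x + y) = a * co x + co y.
  move=> a x y; apply: co_uniq; rewrite -Hco scalerDl -scalerA -!Hco.
  by [].
have normco : forall x, `|x| = `|co x| * `|e| by move=> x; rewrite {1}(Hco x) normrZ.
have coe : co e = 1 by have := coZ 1; rewrite scale1r.
have dual_norm_eq : forall xs : X -> R, (forall x, xs x = co x * xs e) ->
    dual_norm xs = `|xs e| / `|e|.
  move=> xs hxs.
  have ub : forall x : X, `|x| <= 1 -> `|xs x| <= `|xs e| / `|e|.
    move=> x hx; rewrite hxs normrM ler_pdivlMr // mulrAC -normco.
    by apply: ler_piMl.
  apply/le_anti/andP; split.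
    apply: ge_sup; first by exists `|xs 0|, 0 => //=; rewrite normr0.
    by move=> _ [x hx <-]; apply: ub.
  apply: ub_le_sup; first by exists (`|xs e| / `|e|) => _ [x hx <-]; apply: ub.
  exists (`|e|^-1 *: e).
    by rewrite /= normrZ ger0_norm ?invr_ge0 ?(ltW ne) // mulVf.
  by rewrite hxs coZ normrM ger0_norm ?invr_ge0 ?(ltW ne) // mulrC.
split.
- case=> T [[cT linT isoT] Hext].
  have T0 : forall k, T 0 k = 0.
    move=> k; have := linT 1 0 0; rewrite scale1r addr0.
    move=> /(congr1 (fun g => g k)) /=; rewrite mul1r => h; lra.
  have Tx : forall x k, T x k = co x * T e k.
    move=> x k; have := linT (co x) e 0; rewrite addr0 -Hco.
    by move=> /(congr1 (fun g => g k)) /=; rewrite T0 addr0.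
  pose h := T e.
  have sh : supnorm h = `|e| := isoT e.
  have ch : continuous h := cT e.
  have [k0 _] : [set: K] !=set0.
    apply: contrapT => hne.
    have : supnorm h <= 0 by apply: supnorm_le => // x; exfalso; apply: hne; exists x.
    lra.
  have [p0 _ Hp0] := @compact_EVT_max K R (fun x => `|h x|) [set: K]
     (ex_intro _ k0 I) cK (continuous_subspaceT (cont_norm ch)).
  have hle : forall k, `|h k| <= `|e|.
    by move=> k; rewrite -sh; apply: (@supnorm_ub R K cK h ch k).
  have hp0 : `|h p0| = `|e|.
    rewrite -sh; apply/esym/(@supnorm_eq _ _ cK _ _ p0) => //.
    by move=> x; apply: Hp0; rewrite in_setT.
  have s1 : supnorm (fun _ : K => (1 : R)) = 1.
    apply: (@supnorm_eq _ _ cK _ _ k0); first exact: cont_cst.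
      by move=> x; rewrite normr1.
    by rewrite normr1.
  have c1 : continuous (fun _ : K => (1 : R)) by exact: cont_cst.
  have dco : dual_fun co.
    split; first exact: coL.
    by exists `|e|^-1 => x; rewrite (normco x) mulrCA mulVf // mulr1.
  have [ys [dys ext nys uniq]] := Hext co dco.
  have dnco : dual_norm co = `|e|^-1.
    by rewrite dual_norm_eq ?coe ?normr1 ?mul1r // => x; rewrite ?coe mulr1.
  have evk : forall k, `|h k| = `|e| -> forall g : K -> R, continuous g -> g k / h k = ys g.
    move=> k hk g cg.
    have hk0 : h k != 0 by rewrite -normr_eq0 hk.
    have dz : CK_dual (fun g : K -> R => g k / h k).
      split.
      + by move=> g1 g2 _ _; rewrite mulrDl.
      + by move=> a g1 _; rewrite mulrA.
      + exists `|e|^-1 => g1 cg1; rewrite normrM normfV hk mulrC.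
        apply: ler_wpM2l; first by rewrite invr_ge0 ltW.
        exact: (@supnorm_ub R K cK g1 cg1 k).
    apply: (uniq (fun g => g k / h k)) => //.
    + by move=> x; rewrite Tx mulfK.
    + rewrite dnco; apply/le_anti/andP; split.
        apply: dualnorm_le; first by rewrite invr_ge0 ltW.
        move=> g1 cg1 sg1; rewrite normrM normfV hk; apply: ler_piMl.
          by rewrite invr_ge0 ltW.
        exact: le_trans (@supnorm_ub R K cK g1 cg1 k) sg1.
      have := @dualnorm_ge R K cK _ _ dz c1; rewrite s1 => /(_ (lexx 1)).
      by rewrite normrM normfV hk normr1 mul1r.
  case: (pselect (exists q, `|h q| = `|e| /\ q != p0)) => [[q [hq qp]]|nq].
    exfalso.
    have [g [cg g01 gq gp]] := @urysohn_pt R K hK cK [set q] p0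
      (@accessible_closed_set1 K (hausdorff_accessible hK) q)
      (ltac:(by move=> /= E; move: qp; rewrite E eqxx)).
    have h1 := evk p0 hp0 g cg; have h2 := evk q hq g cg.
    have gq0 : g q = 0 by apply: gq.
    rewrite -h2 gq0 mul0r gp mul1r in h1.
    move: h1 => /eqP; rewrite invr_eq0 -normr_eq0 hp0; exact/negP.
  exists p0.
  exists (fun i : nat => (fun k => `|h k|) @^-1` [set r | `|e| - i.+1%:R^-1 < r]).
    move=> i; apply: open_comp; last exact: open_gt.
    by move=> x _; apply: cont_norm.
  apply/seteqP; split.
    move=> k -> i _ /=; rewrite hp0.
    have : 0 < i.+1%:R^-1 :> R by rewrite invr_gt0 ltr0Sn.
    by move=> hi; rewrite ltrBlDr ltrDl.
  move=> k hk /=; case: (eqVneq k p0) => // kp; exfalso; apply: nq; exists k.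
  split => //; apply/le_anti/andP; split; first exact: hle.
  rewrite leNgt; apply/negP => lt.
  have [i hi] := ltr_add_invr lt.
  have := hk i I => /=; rewrite ltrBlDr => h2; have := lt_trans h2 hi; by rewrite ltxx.
- case=> p Gp; have [f [cf f1 fp fpk]] := peak_exists R hK cK Gp.
  have [k0 _] : [set: K] !=set0 by exists p.
  have s1 : supnorm (fun _ : K => (1 : R)) = 1.
    apply: (@supnorm_eq _ _ cK _ _ p); first exact: cont_cst.
      by move=> x; rewrite normr1.
    by rewrite normr1.
  have c1 : continuous (fun _ : K => (1 : R)) by exact: cont_cst.
  exists (fun x k => co x * `|e| * f k); split.
    split.
    + by move=> x; apply: cont_scale.
    + by move=> a x y; apply: funext => k; rewrite coL; ring.
    + move=> x; apply: (@supnorm_eq _ _ cK _ _ p).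
      * by apply: cont_scale.
      * move=> k; rewrite (normco x) !normrM normr_id; apply: ler_piMr => //.
      * by rewrite (normco x) fp mulr1 normrM normr_id.
  move=> xs [xsL [M xsB]].
  have xs0 : xs 0 = 0.
    by have := xsL 1 0 0; rewrite scale1r addr0 mul1r => h; lra.
  have xsx : forall x, xs x = co x * xs e.
    by move=> x; rewrite {1}(Hco x) -[co x *: e]addr0 xsL xs0 addr0.
  pose c := xs e / `|e|.
  have dnx : dual_norm xs = `|c| by rewrite dual_norm_eq // /c normrM normfV normr_id.
  have dys : CK_dual (fun g : K -> R => c * g p).
    split.
    + by move=> g1 g2 _ _; rewrite mulrDr.
    + by move=> a g _; rewrite mulrCA.
    + exists `|c| => g cg; rewrite normrM; apply: ler_wpM2l => //.
      exact: (@supnorm_ub R K cK g cg p).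
  exists (fun g => c * g p); split => //.
  + by move=> x; rewrite fp mulr1 xsx /c; field.
  + rewrite dnx; apply/le_anti/andP; split.
      apply: dualnorm_le => // g cg sg; rewrite normrM; apply: ler_piMr => //.
      exact: le_trans (supnorm_ub cK cg p) sg.
    have := @dualnorm_ge R K cK _ _ dys c1; rewrite s1 => /(_ (lexx 1)).
    by rewrite mulr1.
  + move=> zs dzs zext znorm g cg.
    have [_ Hsc _] := dzs.
    apply: (peak_unique cK cf f1 fp fpk dzs) => //.
      have := zext e; rewrite coe mul1r.
      have -> : (fun k => `|e| * f k) = (fun k => `|e| * f k) by [].
      rewrite Hsc // => h; rewrite /c -h; field.
      exact: ne0.
    by rewrite znorm dnx.

Qed.
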